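(* For all $n\ge 0$, the quadruples of statistics $(\operatorname{asc},\operatorname{des},\operatorname{MNA},\operatorname{MND})$ and $(\operatorname{des},\operatorname{asc},\operatorname{MND},\operatorname{MNA})$ are equidistributed on $S_n(213,231)$, i.e. $$\sum_{\pi\in S_n(213,231)} t_1^{\operatorname{asc}(\pi)}t_2^{\operatorname{des}(\pi)}t_3^{\operatorname{MNA}(\pi)}t_4^{\operatorname{MND}(\pi)}=\sum_{\pi\in S_n(213,231)} t_1^{\operatorname{des}(\pi)}t_2^{\operatorname{asc}(\pi)}t_3^{\operatorname{MND}(\pi)}t_4^{\operatorname{MNA}(\pi)}.$$
   Context: For $n\ge 0$, $S_n$ denotes the set of permutations $\pi=\pi_1\cdots\pi_n$ of $[n]=\{1,\dots,n\}$. $\pi$ avoids a pattern $\tau\in S_k$ if no subsequence $\pi_{i_1}\cdots\pi_{i_k}$ ($i_1<\dots<i_k$) satisfies $\pi_{i_a}<\pi_{i_b}\iff\tau_a<\tau_b$; $S_n(\tau,\rho)$ is the set of permutations in $S_n$ avoiding both $\tau$ and $\rho$. $\operatorname{asc}(\pi)$ (resp. $\operatorname{des}(\pi)$) is the number of $i\in[n-1]$ with $\pi_i<\pi_{i+1}$ (resp. $\pi_i>\pi_{i+1}$). $\operatorname{MNA}(\pi)$ is the maximum size of a set $I\subseteq[n-1]$ such that $\pi_i<\pi_{i+1}$ for all $i\in I$ and $|i-j|\ge 2$ for distinct $i,j\in I$; $\operatorname{MND}(\pi)$ is defined analogously with $\pi_i>\pi_{i+1}$. *)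

(* Defs.v *)
From mathcomp Require Import all_boot all_order all_algebra all_fingroup.
Set Implicit Arguments. Unset Strict Implicit. Unset Printing Implicit Defensive.

(* Values/positions are shifted
   by one relative to the paper, which does not affect any order statistic. *)

Definition oneline (n : nat) (p : 'S_n) : seq nat := [seq val (p i) | i <- enum 'I_n].

Definition contains (n : nat) (p : 'S_n) (tau : seq nat) : bool :=
  [exists f : {ffun 'I_(size tau) -> 'I_n},
     [forall a : 'I_(size tau), forall b : 'I_(size tau), (a < b) ==> (f a < f b)] &&
     [forall a : 'I_(size tau), forall b : 'I_(size tau),
        (p (f a) < p (f b)) == (nth 0 tau a < nth 0 tau b)]].

Definition avoids (n : nat) (p : 'S_n) (tau : seq nat) : bool := ~~ contains p tau.

Definition Av213_231 (n : nat) : {set 'S_n} :=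
  [set p : 'S_n | avoids p [:: 2; 1; 3] && avoids p [:: 2; 3; 1]].

Definition is_asc (n : nat) (p : 'S_n) (i : nat) : bool :=
  (i.+1 < n) && (nth 0 (oneline p) i < nth 0 (oneline p) i.+1).
Definition is_des (n : nat) (p : 'S_n) (i : nat) : bool :=
  (i.+1 < n) && (nth 0 (oneline p) i.+1 < nth 0 (oneline p) i).

Definition asc (n : nat) (p : 'S_n) : nat := count (is_asc p) (iota 0 n).
Definition des (n : nat) (p : 'S_n) : nat := count (is_des p) (iota 0 n).

Definition nonadj (n : nat) (P : nat -> bool) (I : {set 'I_n}) : bool :=
  [forall i in I, P i] &&
  [forall i in I, forall j in I, (i != j) ==> ((i.+1 < j) || (j.+1 < i))].

Definition MNA (n : nat) (p : 'S_n) : nat :=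
  \max_(I : {set 'I_n} | nonadj (is_asc p) I) #|I|.
Definition MND (n : nat) (p : 'S_n) : nat :=
  \max_(I : {set 'I_n} | nonadj (is_des p) I) #|I|.

(* Main.v *)
Require Import Defs.
From mathcomp Require Import all_boot all_order all_algebra all_fingroup.
From mathcomp Require Import zify.
Local Open Scope ring_scope.

Section Comp.
Variable n : nat.

Lemma compf_inj (p : 'S_n) : injective (fun i => rev_ord (p i)).
Proof. by move=> i j /rev_ord_inj /perm_inj. Qed.

Definition compl (p : 'S_n) : 'S_n := perm (@compf_inj p).

Lemma complE p i : compl p i = rev_ord (p i).
Proof. by rewrite permE. Qed.

Lemma compl_inv : involutive compl.
Proof. by move=> p; apply/permP => i; rewrite !complE rev_ordK. Qed.

Lemma compl_lt p (u v : 'I_n) : (compl p u < compl p v)%N = (p v < p u)%N.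
Proof.
rewrite !complE /=; have := ltn_ord (p u); have := ltn_ord (p v).
case: ltnP => h1; case: ltnP => h2; lia.
Qed.

Lemma nth_oneline p (i : nat) (Hi : (i < n)%N) :
  nth 0%N (oneline p) i = val (p (Ordinal Hi)).
Proof.
rewrite /oneline (nth_map (Ordinal Hi)) ?size_enum_ord //.
by congr (val (p _)); apply: val_inj; rewrite /= nth_enum_ord.
Qed.

Lemma is_asc_compl p i : is_asc (compl p) i = is_des p i.
Proof.
rewrite /is_asc /is_des; case: (ltnP i.+1 n) => //= Hi.
have Hi0 : (i < n)%N by apply: ltnW.
rewrite !nth_oneline; exact: compl_lt.
Qed.

Lemma is_des_compl p i : is_des (compl p) i = is_asc p i.
Proof.
rewrite /is_asc /is_des; case: (ltnP i.+1 n) => //= Hi.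
have Hi0 : (i < n)%N by apply: ltnW.
rewrite !nth_oneline; exact: compl_lt.
Qed.

Lemma asc_compl p : asc (compl p) = des p.
Proof. by rewrite /asc /des; apply: eq_count => i; rewrite is_asc_compl. Qed.
Lemma des_compl p : des (compl p) = asc p.
Proof. by rewrite /asc /des; apply: eq_count => i; rewrite is_des_compl. Qed.

Lemma nonadj_eq (P Q : nat -> bool) (I : {set 'I_n}) :
  P =1 Q -> nonadj P I = nonadj Q I.
Proof.
move=> H; rewrite /nonadj; congr (_ && _).
by apply: eq_forallb => i; rewrite H.
Qed.

Lemma MNA_compl p : MNA (compl p) = MND p.
Proof. by apply: eq_bigl => I; apply: nonadj_eq => i; rewrite is_asc_compl. Qed.
Lemma MND_compl p : MND (compl p) = MNA p.
Proof. by apply: eq_bigl => I; apply: nonadj_eq => i; rewrite is_des_compl. Qed.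

Lemma contains_compl p (x y z x' y' z' : nat) :
  (forall a b : 'I_3, (nth 0%N [:: x; y; z] b < nth 0%N [:: x; y; z] a)%N
                      = (nth 0%N [:: x'; y'; z'] a < nth 0%N [:: x'; y'; z'] b)%N) ->
  contains (compl p) [:: x; y; z] = contains p [:: x'; y'; z'].
Proof.
move=> H; rewrite /contains.
apply/existsP/existsP => -[f /andP[H1 H2]]; exists f; rewrite H1 /=;
  apply/forallP => a; apply/forallP => b.
- have := forallP (forallP H2 b) a; rewrite compl_lt H.
  by move/eqP ->.
- rewrite compl_lt (H b a).
  by have := forallP (forallP H2 b) a.
Qed.

Lemma Av_compl p : (compl p \in Av213_231 n) = (p \in Av213_231 n).
Proof.
rewrite !inE /avoids.
rewrite (@contains_compl p 2 1 3 2 3 1); last first.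
  by case=> [[|[|[|a]]] Ha] [[|[|[|b]]] Hb].
rewrite (@contains_compl p 2 3 1 2 1 3); last first.
  by case=> [[|[|[|a]]] Ha] [[|[|[|b]]] Hb].
by rewrite andbC.
Qed.

End Comp.

Theorem theorem13 (R : comNzRingType) (n : nat) (t1 t2 t3 t4 : R) :
  \sum_(p in Av213_231 n)
     t1 ^+ asc p * t2 ^+ des p * t3 ^+ MNA p * t4 ^+ MND p
  = \sum_(p in Av213_231 n)
     t1 ^+ des p * t2 ^+ asc p * t3 ^+ MND p * t4 ^+ MNA p.
Proof.
rewrite (reindex_inj (inv_inj (@compl_inv n))) /=.
apply: eq_big => p; first exact: Av_compl.
by rewrite asc_compl des_compl MNA_compl MND_compl.
Qed.
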